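(* The two-dimensional subalgebras of ${\rm A}_5$ are exactly $\langle e_1,e_2\rangle$, $\langle e_1\pm e_3,e_2\rangle$ and $\langle e_1,\alpha e_2+e_3\rangle$ ($\alpha\in\mathbb{C}$). Up to automorphisms of ${\rm A}_5$, every two-dimensional subalgebra is equivalent to one of $\langle e_1,e_2\rangle$, $\langle e_1+e_3,e_2\rangle$, $\langle e_1-e_3,e_2\rangle$, $\langle e_1,e_3\rangle$.
   Context: ${\rm A}_5$ is the complex algebra with basis $e_1,e_2,e_3$, unit $e_1$ ($e_1e_i=e_ie_1=e_i$), $e_2e_3=e_2$, $e_3e_2=-e_2$, $e_3e_3=e_1$; all other products of basis elements are zero. A subalgebra is a linear subspace closed under multiplication (it need not contain $e_1$). Equivalence up to automorphisms means one is mapped onto the other by an algebra automorphism. $\langle S\rangle$ denotes linear span. *)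

(* Defs.v *)
From HB Require Import structures.
From mathcomp Require Import all_boot all_order all_algebra.
From mathcomp Require Import complex.
From mathcomp Require Import reals.
Set Implicit Arguments. Unset Strict Implicit. Unset Printing Implicit Defensive.
Import Order.TTheory GRing.Theory Num.Theory.
Local Open Scope ring_scope.

(* The algebra A_5 over C = R[i] (R : realType, i.e. C is the complex numbers),
   realised on row vectors 'rV[C]_3; coordinate k (k = 0,1,2) is the
   coefficient of e_(k+1). *)
Section A5.
Variable R : realType.
Local Notation C := (R[i])%C.
Local Notation V := 'rV[C]_3.

Definition e1 : V := delta_mx 0 (inord 0).
Definition e2 : V := delta_mx 0 (inord 1).
Definition e3 : V := delta_mx 0 (inord 2).

Definition coord3 (x : V) (k : nat) : C := x 0 (inord k).

(* Bilinear extension of the multiplication table: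
   e1 unit, e2 e3 = e2, e3 e2 = - e2, e3 e3 = e1, other products 0. *)
Definition mulA5 (x y : V) : V :=
  let a1 := coord3 x 0 in let a2 := coord3 x 1 in let a3 := coord3 x 2 in
  let b1 := coord3 y 0 in let b2 := coord3 y 1 in let b3 := coord3 y 2 in
  (a1 * b1 + a3 * b3) *: e1
  + (a1 * b2 + a2 * b1 + a2 * b3 - a3 * b2) *: e2
  + (a1 * b3 + a3 * b1) *: e3.

Definition is_subalgA5 (U : {vspace V}) : Prop :=
  forall x y, x \in U -> y \in U -> mulA5 x y \in U.

Definition is_autA5 (f : V -> V) : Prop :=
  [/\ (forall (a : C) (x y : V), f (a *: x + y) = a *: f x + f y),
      bijective f &
      (forall x y, f (mulA5 x y) = mulA5 (f x) (f y))].

Definition aut_equivA5 (U W : {vspace V}) : Prop :=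
  exists f, is_autA5 f /\ (forall y, y \in W <-> exists2 x, x \in U & f x = y).
End A5.

(* Main.v *)
Require Import Defs.
From HB Require Import structures.
From mathcomp Require Import all_boot all_order all_algebra.
From mathcomp Require Import complex.
From mathcomp Require Import reals.
From mathcomp Require Import ring.
Import Order.TTheory GRing.Theory Num.Theory.
Local Open Scope ring_scope.

Section S.
Variable R : realType.
Local Notation C := (R[i])%C.
Local Notation V := 'rV[C]_3.

Lemma i0 : (inord 0 : 'I_3) = Ordinal (isT : 0 < 3)%N. Proof. by apply: ord_inj; rewrite inordK. Qed.
Lemma i1 : (inord 1 : 'I_3) = Ordinal (isT : 1 < 3)%N. Proof. by apply: ord_inj; rewrite inordK. Qed.
Lemma i2 : (inord 2 : 'I_3) = Ordinal (isT : 2 < 3)%N. Proof. by apply: ord_inj; rewrite inordK. Qed.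

Definition mk (a b c : C) : V := a *: e1 R + b *: e2 R + c *: e3 R.

Lemma mkE a b c k : (mk a b c) 0 k = if val k == 0%N then a else if val k == 1%N then b else c.
Proof.
rewrite /mk /e1 /e2 /e3 !mxE i0 i1 i2.
case: k => [[|[|[|]]] //= Hk].
all: rewrite ?mulr0 ?mulr1 ?addr0 ?add0r //.
Qed.
Lemma coord_mk a b c : [/\ coord3 (mk a b c) 0 = a, coord3 (mk a b c) 1 = b & coord3 (mk a b c) 2 = c].
Proof. by rewrite /coord3 !mkE i0 i1 i2. Qed.
Lemma mk_coord x : x = mk (coord3 x 0) (coord3 x 1) (coord3 x 2).
Proof.
apply/rowP => k; rewrite mkE /coord3 i0 i1 i2.
by case: k => [[|[|[|]]] //= Hk]; congr (x 0 _); apply/val_inj.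
Qed.

Lemma mk_inj a b c a' b' c' : mk a b c = mk a' b' c' -> [/\ a = a', b = b' & c = c'].
Proof.
move=> E; have [h1 h2 h3] := coord_mk a b c; have [h1' h2' h3'] := coord_mk a' b' c'.
split.
- by rewrite -h1 -h1' E.
- by rewrite -h2 -h2' E.
- by rewrite -h3 -h3' E.
Qed.
Lemma mkD a b c a' b' c' : mk a b c + mk a' b' c' = mk (a + a') (b + b') (c + c').
Proof. by apply/rowP => k; rewrite mxE !mkE; case: ifP => _ //; case: ifP. Qed.
Lemma mkZ s a b c : s *: mk a b c = mk (s * a) (s * b) (s * c).
Proof. by rewrite /mk !scalerDr !scalerA. Qed.
Lemma mkN a b c : - mk a b c = mk (- a) (- b) (- c).
Proof. by rewrite -scaleN1r mkZ !mulN1r. Qed.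
Lemma e1mk : e1 R = mk 1 0 0. Proof. by rewrite /mk scale1r !scale0r !addr0. Qed.
Lemma e2mk : e2 R = mk 0 1 0. Proof. by rewrite /mk scale1r !scale0r addr0 add0r. Qed.
Lemma e3mk : e3 R = mk 0 0 1. Proof. by rewrite /mk scale1r !scale0r !add0r. Qed.
Lemma mk0 : (0 : V) = mk 0 0 0. Proof. by rewrite /mk !scale0r !addr0. Qed.
Lemma mulmk a1 a2 a3 b1 b2 b3 : mulA5 (mk a1 a2 a3) (mk b1 b2 b3) =
  mk (a1 * b1 + a3 * b3) (a1 * b2 + a2 * b1 + a2 * b3 - a3 * b2) (a1 * b3 + a3 * b1).
Proof.
rewrite /mulA5; have [-> -> ->] := coord_mk a1 a2 a3; have [-> -> ->] := coord_mk b1 b2 b3.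
by [].
Qed.

Lemma span2E (a b : V) : span [:: a; b] = (<[a]> + <[b]>)%VS.
Proof. by rewrite !span_cons span_nil addv0. Qed.

Lemma span2P (a b x : V) : x \in span [:: a; b] <-> exists s t, x = s *: a + t *: b.
Proof.
rewrite span2E; split.
  by case/memv_addP => u /vlineP [s ->] [v /vlineP [t ->] ->]; exists s, t.
case=> s [t ->]; apply: memv_add; exact: memvZ (memv_line _).
Qed.

Lemma dim_span2 (a b : V) : (forall s t, s *: a + t *: b = 0 -> s = 0 /\ t = 0) ->
  \dim (span [:: a; b]) = 2%N.
Proof.
move=> H; have := dimv_sum_cap <[a]> <[b]>; rewrite -span2E.
have a0 : a != 0.
  apply/eqP => a0; have [] := H 1 0; rewrite ?a0 ?scaler0 ?scale0r ?addr0 //.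
  by move/eqP; rewrite oner_eq0.
have b0 : b != 0.
  apply/eqP => b0; have [] := H 0 1; rewrite ?b0 ?scaler0 ?scale0r ?addr0 //.
  by move=> _ /eqP; rewrite oner_eq0.
have -> : (<[a]> :&: <[b]> = 0)%VS.
  apply/eqP; rewrite -subv0; apply/subvP => x /memv_capP [/vlineP [s ->] /vlineP [t E]].
  have E0 : s *: a + (- t) *: b = 0 by rewrite E scaleNr subrr.
  have [-> _] := H _ _ E0.
  by rewrite scale0r memv0.
by rewrite dimv0 !dim_vline a0 b0 addn0 => ->.
Qed.

Lemma eq_span2 (U : {vspace V}) (a b : V) : \dim U = 2%N -> a \in U -> b \in U ->
  (forall s t, s *: a + t *: b = 0 -> s = 0 /\ t = 0) -> U = span [:: a; b].
Proof.
move=> dU aU bU H; apply/eqP; rewrite eq_sym eqEdim dim_span2 // dU leqnn andbT.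
by apply/span_subvP => x; rewrite !inE => /orP [] /eqP ->.
Qed.

Lemma cap_nz (U W : {vspace V}) : \dim U = 2%N -> \dim W = 2%N ->
  exists x, [/\ x \in U, x \in W & x != 0].
Proof.
move=> dU dW; have := dimv_sum_cap U W; rewrite dU dW.
have : (\dim (U + W) <= 3)%N by have := dimvS (subvf (U + W)); rewrite dimvf.

move=> le3 E.
have : (U :&: W != 0)%VS.
  apply/negP => /eqP E0; move: E; rewrite E0 dimv0 addn0 => E; move: le3; rewrite E.
  by [].
rewrite -vpick0 => nz; exists (vpick (U :&: W)%VS).
by have /memv_capP [] := memv_pick (U :&: W)%VS.
Qed.

Lemma mk_eq a b c a' b' c' : a = a' -> b = b' -> c = c' -> mk a b c = mk a' b' c'.
Proof. by move=> -> -> ->. Qed.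

Ltac norm := rewrite ?e1mk ?e2mk ?e3mk ?mk0; rewrite ?(mkN, mkD, mkZ, mulmk).

Ltac simp := rewrite ?(mulr1, mulr0, mul0r, addr0, add0r, subr0, sub0r, oppr0, mulrN).

Lemma closed_span2 (a b : V) :
  (forall s t s' t', exists S T, mulA5 (s *: a + t *: b) (s' *: a + t' *: b) = S *: a + T *: b) ->
  is_subalgA5 (span [:: a; b]).
Proof.
move=> H x y /span2P [s [t ->]] /span2P [s' [t' ->]].
by have [S [T ->]] := H s t s' t'; apply/span2P; exists S, T.
Qed.


Lemma indep_of (a b : V) a1 a2 a3 b1 b2 b3 : a = mk a1 a2 a3 -> b = mk b1 b2 b3 ->
  (forall s t, [/\ s * a1 + t * b1 = 0, s * a2 + t * b2 = 0 & s * a3 + t * b3 = 0] -> s = 0 /\ t = 0) ->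
  (forall s t, s *: a + t *: b = 0 -> s = 0 /\ t = 0).
Proof.
move=> -> -> H s t; rewrite !mkZ mkD mk0 => /mk_inj [h1 h2 h3]; exact: H.
Qed.

Lemma part1_bwd (U : {vspace V}) :
     [\/ U = (span [:: e1 R; e2 R]),
         U = (span [:: e1 R + e3 R; e2 R]),
         U = (span [:: e1 R - e3 R; e2 R])
       | exists alpha : C, U = (span [:: e1 R; alpha *: e2 R + e3 R])] ->
  is_subalgA5 U /\ \dim U = 2%N.
Proof.
case=> [->|->|->|[al ->]]; split.
- apply: closed_span2 => s t s' t'; exists (s * s'), (s * t' + t * s'); norm; apply: mk_eq; ring.
- apply: dim_span2 => s t; norm => /mk_inj [h1 h2 h3].
  by split; move: h1 h2; rewrite ?(mulr1, mulr0, addr0, add0r).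
- apply: closed_span2 => s t s' t'; exists (2 * s * s'), (2 * t * s'); norm; apply: mk_eq; ring.
- apply: dim_span2 => s t; norm => /mk_inj [h1 h2 h3].
  by split; move: h1 h2; rewrite ?(mulr1, mulr0, addr0, add0r).
- apply: closed_span2 => s t s' t'; exists (2 * s * s'), (2 * s * t'); norm; apply: mk_eq; ring.
- apply: dim_span2 => s t; norm => /mk_inj [h1 h2 h3].
  by split; move: h1 h2; rewrite ?(mulr1, mulr0, addr0, add0r, subr0, oppr0, mulrN).
- apply: closed_span2 => s t s' t'; exists (s * s' + t * t'), (s * t' + t * s'); norm; apply: mk_eq; ring.
- apply: dim_span2 => s t; norm => /mk_inj [h1 h2 h3].
  by split; move: h1 h3; rewrite ?(mulr1, mulr0, addr0, add0r).
Qed.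

Lemma part1_fwd (U : {vspace V}) : is_subalgA5 U -> \dim U = 2%N ->
     [\/ U = (span [:: e1 R; e2 R]),
         U = (span [:: e1 R + e3 R; e2 R]),
         U = (span [:: e1 R - e3 R; e2 R])
       | exists alpha : C, U = (span [:: e1 R; alpha *: e2 R + e3 R])].
Proof.
move=> HU dU.
case: (boolP (e2 R \in U)) => He2.
- have d13 : \dim (span [:: e1 R; e3 R]) = 2%N.
    by apply: dim_span2 => s t; norm => /mk_inj [h1 h2 h3]; split; move: h1 h3; simp.
  have [x [xU /span2P [s [t Ex]] x0]] := @cap_nz U _ dU d13.
  have Exm : x = mk s 0 t by rewrite Ex; norm; apply: mk_eq; ring.
  have nst : ~ (s = 0 /\ t = 0).
    by case=> s0 t0; move: x0; rewrite Exm s0 t0 -mk0 eqxx.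
  have dx : U = span [:: x; e2 R].
    apply: eq_span2 => // p q; rewrite Exm; norm => /mk_inj [h1 h2 h3].
    move: h1 h2 h3; simp => h1 h2 h3; split => //.
    have [//|p0] := eqVneq p 0; exfalso; apply: nst; split; apply/eqP.
    + by move: h1 => /eqP; rewrite mulf_eq0 (negbTE p0).
    + by move: h3 => /eqP; rewrite mulf_eq0 (negbTE p0).
  have x2U : mulA5 x x \in span [:: x; e2 R] by rewrite -dx; exact: HU.
  move/span2P: x2U => [p [q E]].
  have [h1 h3] : s * s + t * t = p * s + q * 0 /\ s * t + t * s = p * t + q * 0.
    by move: E; rewrite Exm; norm => /mk_inj [-> _ ->].
  have key : t * (t - s) * (t + s) = 0.
    rewrite (_ : t * (t - s) * (t + s) = t * (s * s + t * t) - s * (s * t + t * s)); last by ring.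
    by rewrite h1 h3; ring.
  move/eqP: key; rewrite !mulf_eq0 subr_eq0 addr_eq0 => /orP [/orP [/eqP t0 | /eqP ts] | /eqP ts].
  + have s0 : s != 0 by apply/eqP => s0; apply: nst.
    have E1 : e1 R = s^-1 *: x by rewrite Exm t0; norm; apply: mk_eq; field.
    constructor 1; apply: eq_span2 => //; first by rewrite E1 memvZ.
    by move=> a b; norm => /mk_inj [h1' h2' h3']; move: h1' h2'; simp.
  + have s0 : s != 0 by apply/eqP => s0; apply: nst; rewrite ts s0.
    have E1 : e1 R + e3 R = s^-1 *: x by rewrite Exm ts; norm; apply: mk_eq; field.
    constructor 2; apply: eq_span2 => //; first by rewrite E1 memvZ.
    by move=> a b; norm => /mk_inj [h1' h2' h3']; move: h1' h2'; simp.
  + have s0 : s != 0 by apply/eqP => s0; apply: nst; rewrite ts s0 oppr0.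
    have E1 : e1 R - e3 R = s^-1 *: x by rewrite Exm ts; norm; apply: mk_eq; field.
    constructor 3; apply: eq_span2 => //; first by rewrite E1 memvZ.
    by move=> a b; norm => /mk_inj [h1' h2' h3']; move: h1' h2'; simp.
- have d12 : \dim (span [:: e1 R; e2 R]) = 2%N.
    by apply: dim_span2 => s t; norm => /mk_inj [h1 h2 h3]; split; move: h1 h2; simp.
  have [u [uU /span2P [p [q Eu]] u0]] := @cap_nz U _ dU d12.
  have Eum : u = mk p q 0 by rewrite Eu; norm; apply: mk_eq; ring.
  have p0 : p != 0.
    apply/eqP => p0; move: He2; apply/negP/negPn.
    have q0 : q != 0 by apply/eqP => q0; move: u0; rewrite Eum p0 q0 -mk0 eqxx.
    have -> : e2 R = q^-1 *: u by rewrite Eum p0; norm; apply: mk_eq; field.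
    by rewrite memvZ.
  have q0 : q = 0.
    have [//|q0] := eqVneq q 0; exfalso; move: He2; apply/negP/negPn.
    have -> : e2 R = (p * q)^-1 *: (mulA5 u u - p *: u).
      by rewrite Eum; norm; apply: mk_eq; field; rewrite q0 p0.
    by rewrite memvZ // memvB // ?memvZ // HU.
  have E1 : e1 R = p^-1 *: u by rewrite Eum q0; norm; apply: mk_eq; field.
  have d23 : \dim (span [:: e2 R; e3 R]) = 2%N.
    by apply: dim_span2 => s t; norm => /mk_inj [h1 h2 h3]; split; move: h2 h3; simp.
  have [v [vU /span2P [r [t Ev]] v0]] := @cap_nz U _ dU d23.
  have Evm : v = mk 0 r t by rewrite Ev; norm; apply: mk_eq; ring.
  have t0 : t != 0.
    apply/eqP => t0; move: He2; apply/negP/negPn.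
    have r0 : r != 0 by apply/eqP => r0; move: v0; rewrite Evm r0 t0 -mk0 eqxx.
    have -> : e2 R = r^-1 *: v by rewrite Evm t0; norm; apply: mk_eq; field.
    by rewrite memvZ.
  constructor 4; exists (r / t).
  have E3 : (r / t) *: e2 R + e3 R = t^-1 *: v by rewrite Evm; norm; apply: mk_eq; field.
  apply: eq_span2 => //; first by rewrite E1 memvZ.
    by rewrite E3 memvZ.
  by move=> a b; norm => /mk_inj [h1' h2' h3']; move: h1' h3'; simp.
Qed.

Lemma aut_refl (U : {vspace V}) : aut_equivA5 U U.
Proof.
exists id; split; first by split => //; exists id.
by move=> y; split => [yU|[x xU <-] //]; exists y.
Qed.

Definition fsh (al : C) (x : V) : V :=
  mk (coord3 x 0) (coord3 x 1 - al * coord3 x 2) (coord3 x 2).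

Lemma fsh_mk al a b c : fsh al (mk a b c) = mk a (b - al * c) c.
Proof. by rewrite /fsh; have [-> -> ->] := coord_mk a b c. Qed.

Lemma fshK al : cancel (fsh al) (fsh (- al)).
Proof.
move=> x; rewrite /fsh; have [-> -> ->] := coord_mk (coord3 x 0) (coord3 x 1 - al * coord3 x 2) (coord3 x 2).
by rewrite [RHS]mk_coord; apply: mk_eq; ring.
Qed.

Lemma fsh_aut al : is_autA5 (fsh al).
Proof.
split.
- move=> a x y; rewrite (mk_coord x) (mk_coord y) ?(mkD, mkZ, fsh_mk); apply: mk_eq; ring.
- exists (fsh (- al)); first exact: fshK.
  by have := fshK (- al); rewrite opprK.
- move=> x y; rewrite (mk_coord x) (mk_coord y) mulmk !fsh_mk mulmk; apply: mk_eq; ring.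
Qed.

Lemma aut_shear al : aut_equivA5 (span [:: e1 R; al *: e2 R + e3 R]) (span [:: e1 R; e3 R]).
Proof.
exists (fsh al); split; first exact: fsh_aut.
move=> y; split.
- case/span2P => s [t ->]; exists (s *: e1 R + t *: (al *: e2 R + e3 R)).
    by apply/span2P; exists s, t.
  norm; rewrite fsh_mk; apply: mk_eq; ring.
- case=> x /span2P [s [t ->]] <-; apply/span2P; exists s, t.
  norm; rewrite fsh_mk; apply: mk_eq; ring.
Qed.
End S.

Theorem mainTheorem13 (R : realType) :
  (forall U : {vspace 'rV[(R[i])%C]_3},
     (is_subalgA5 U /\ \dim U = 2%N) <->
     [\/ U = (span [:: e1 R; e2 R]),
         U = (span [:: e1 R + e3 R; e2 R]),
         U = (span [:: e1 R - e3 R; e2 R])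
       | exists alpha : (R[i])%C, U = (span [:: e1 R; alpha *: e2 R + e3 R])])
  /\
  (forall U : {vspace 'rV[(R[i])%C]_3},
     is_subalgA5 U -> \dim U = 2%N ->
     [\/ aut_equivA5 U (span [:: e1 R; e2 R]),
         aut_equivA5 U (span [:: e1 R + e3 R; e2 R]),
         aut_equivA5 U (span [:: e1 R - e3 R; e2 R])
       | aut_equivA5 U (span [:: e1 R; e3 R])]).
Proof.
split.
- move=> U; split; first by case=> HU dU; exact: (@part1_fwd R U HU dU).
  exact: (@part1_bwd R U).
- move=> U HU dU; case: (@part1_fwd R U HU dU) => [E|E|E|[al E]].
  + by constructor 1; rewrite -E; apply: aut_refl.
  + by constructor 2; rewrite -E; apply: aut_refl.
  + by constructor 3; rewrite -E; apply: aut_refl.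
  + by constructor 4; rewrite E; apply: aut_shear.
Qed.
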